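(* Let $(F,G)\in\tilde{\mathrm{Z}}_b^2(A)_\ell$ for some integer $\ell<0$, and put $r=-\ell$. For $x\otimes y\in(B\otimes B)_r$ one has $F(x,y)\in A_0=H$. Define $f\colon B\otimes B\to\Bbbk$ by $f|_{(B\otimes B)_r}=\lambda\circ F$ and $f|_{(B\otimes B)_s}=0$ for $s\neq r$. Then: 1. $f$ is an $H$-stable Hochschild $2$-cocycle of $B$ with coefficients in $\Bbbk$ via $\varepsilon$. 2. If $\tilde f\colon A\otimes A\to\Bbbk$ is the induced map $\tilde f(xh,yk)=f(x,h\cdot y)\varepsilon(k)$ for $x,y\in B$ and $h,k\in H$, then $F+\partial^c\tilde f$ vanishes on $(A\otimes A)_r$. Here $\partial^c\tilde f(a,b)=a_1b_1\tilde f(a_2,b_2)-\tilde f(a_1,b_1)a_2b_2$.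
   Context: Let $\Bbbk$ be an algebraically closed field of characteristic $0$. Let $H$ be a Hopf algebra over $\Bbbk$ with bijective antipode $\mathcal S$. Let ${}^H_H\mathcal{YD}$ be the braided category of left Yetter–Drinfeld modules over $H$, with coaction written $b\mapsto b_{-1}\otimes b_0$. Let $B=\bigoplus_{n\ge0}B_n$ be a graded connected bialgebra in ${}^H_H\mathcal{YD}$: $B_0=\Bbbk$, and each $B_n$ is a Yetter–Drinfeld submodule. Put $B^+=\bigoplus_{n>0}B_n$. Let $A=B\#H$ be the bosonization (Radford–Majid biproduct). It is graded by $A_n=B_n\# H$, so that $A_0=H$. Let $\pi\colon A\to H$, $b\#h\mapsto\varepsilon(b)h$, be the canonical projection. Write $\Delta(a)=a_1\otimes a_2$ in $A$. Grade $A\otimes A$ and $B\otimes B$ by total degree. Standing assumption: there is a linear map $\lambda\colon H\to\Bbbk$ with $\lambda(1)=1$, $h_1\lambda(h_2)=\lambda(h)1_H$ for all $h\in H$ (a right integral for $H^*$), and $\lambda(h_1k\mathcal S(h_2))=\varepsilon(h)\lambda(k)$ for all $h,k\in H$. Let $\widehat{\mathrm{Z}}_b^2(A)$ be the set of pairs $(f,g)$ of linear maps $f\colon A\otimes A\to A$ and $g\colon A\to A\otimes A$ satisfying the following conditions. - Normalization: $f(1,\cdot)=f(\cdot,1)=0$, $\varepsilon f=0$, $g(1)=0$, and $(\varepsilon\otimes\mathrm{id})g=(\mathrm{id}\otimes\varepsilon)g=0$. - Hochschild cocycle condition: $af(b,c)+f(a,bc)=f(ab,c)+f(a,b)c$.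 - Coalgebra cocycle condition: $c_1\otimes g(c_2)+(\mathrm{id}\otimes\Delta)g(c)=(\Delta\otimes\mathrm{id})g(c)+g(c_1)\otimes c_2$. - Compatibility: $f(a_1,b_1)\otimes a_2b_2-\Delta f(a,b)+a_1b_1\otimes f(a_2,b_2)=-\Delta(a)g(b)+g(ab)-g(a)\Delta(b)$. Let $\tilde{\mathrm{Z}}_b^2(A)$ be the set of $(f,g)\in\widehat{\mathrm{Z}}_b^2(A)$ that are $H$-bitrivial, i.e. $f|_{A_0\otimes A}=0=f|_{A\otimes A_0}$ and $(\pi\otimes\mathrm{id})g=0=(\mathrm{id}\otimes\pi)g$. The subscript $\ell$ denotes pairs homogeneous of degree $\ell$, i.e. $f((A\otimes A)_p)\subseteq A_{p+\ell}$ and $g(A_p)\subseteq(A\otimes A)_{p+\ell}$ for all $p$. A Hochschild $2$-cocycle of $B$ with coefficients in $\Bbbk$ via $\varepsilon$ is a linear map $\eta\colon B\otimes B\to\Bbbk$ with $\varepsilon(a)\eta(b,c)-\eta(ab,c)+\eta(a,bc)-\eta(a,b)\varepsilon(c)=0$. $H$ acts on such maps by $(h\cdot\eta)(x,y)=\eta(h_1\cdot x,h_2\cdot y)$, and $\eta$ is $H$-stable if $h\cdot\eta=\varepsilon(h)\eta$ for all $h\in H$. *)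

(* Defs.v *)
From HB Require Import structures.
From mathcomp Require Import all_boot all_order all_algebra.
Set Implicit Arguments. Unset Strict Implicit. Unset Printing Implicit Defensive.
Import GRing.Theory.
Local Open Scope ring_scope.

(* Tensors.  An element of V (x) W is represented by a finite formal sum     *)
(* sum_i v_i (x) w_i, i.e. a list of pairs.  Two formal sums are equal in    *)
(* V (x) W iff every bilinear form on V x W takes the same value on them     *)
(* (over a field, bilinear forms separate the points of V (x) W).            *)
Section Tensors.
Variable k : fieldType.

Definition tens (V W : Type) := seq (V * W).
Definition tens3 (U V W : Type) := seq (U * V * W).

Definition linform (V : lmodType k) (f : V -> k) :=
  forall a x y, f (a *: x + y) = a * f x + f y.
Definition linmap (V W : lmodType k) (f : V -> W) :=
  forall a x y, f (a *: x + y) = a *: f x + f y.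
Definition bilin (V W : lmodType k) (phi : V -> W -> k) :=
  (forall w, linform (phi^~ w)) /\ (forall v, linform (phi v)).
Definition bilinmap (V W U : lmodType k) (phi : V -> W -> U) :=
  (forall w, linmap (phi^~ w)) /\ (forall v, linmap (phi v)).
Definition trilin (U V W : lmodType k) (phi : U -> V -> W -> k) :=
  (forall v w, linform (fun u => phi u v w)) /\
  (forall u w, linform (fun v => phi u v w)) /\
  (forall u v, linform (fun w => phi u v w)).

Definition tsum (V W : lmodType k) (phi : V -> W -> k) (t : tens V W) : k :=
  \sum_(p <- t) phi p.1 p.2.
Definition tsum3 (U V W : lmodType k) (phi : U -> V -> W -> k)
  (t : tens3 U V W) : k := \sum_(p <- t) phi p.1.1 p.1.2 p.2.

Definition teq (V W : lmodType k) (s t : tens V W) :=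
  forall phi : V -> W -> k, bilin phi -> tsum phi s = tsum phi t.
Definition teq3 (U V W : lmodType k) (s t : tens3 U V W) :=
  forall phi : U -> V -> W -> k, trilin phi -> tsum3 phi s = tsum3 phi t.

Definition tscale (V W : lmodType k) (c : k) (t : tens V W) : tens V W :=
  [seq (c *: p.1, p.2) | p <- t].

Definition tlin (V W U : lmodType k) (f : V -> tens W U) :=
  forall a x y, teq (f (a *: x + y)) (tscale a (f x) ++ f y).

(* Hopf algebras (Sweedler: D h = sum h_1 (x) h_2).                          *)
Definition D2 (H : algType k) (D : H -> tens H H) (h : H) : tens3 H H H :=
  [seq (p.1, q.1, q.2) | p <- D h, q <- D p.2].

Record hopf_algebra (H : algType k) (D : H -> tens H H) (e : H -> k)
    (S : H -> H) : Prop := {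
  hD_lin : tlin D;
  he_lin : linform e;
  hS_lin : linmap S;
  hD_coassoc : forall h,
    teq3 [seq (p.1, q.1, q.2) | p <- D h, q <- D p.2]
         [seq (q.1, q.2, p.2) | p <- D h, q <- D p.1];
  hD_counitl : forall h, \sum_(p <- D h) e p.1 *: p.2 = h;
  hD_counitr : forall h, \sum_(p <- D h) e p.2 *: p.1 = h;
  hD_mul : forall h g, teq (D (h * g)) [seq (p.1 * q.1, p.2 * q.2) | p <- D h, q <- D g];
  hD_one : teq (D 1) [:: (1, 1)];
  he_mul : forall h g, e (h * g) = e h * e g;
  he_one : e 1 = 1;
  hS_left : forall h, \sum_(p <- D h) S p.1 * p.2 = e h *: 1;
  hS_right : forall h, \sum_(p <- D h) p.1 * S p.2 = e h *: 1;
  hS_bij : bijective S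
}.

Record integral_cond (H : algType k) (D : H -> tens H H) (e : H -> k)
    (S : H -> H) (lam : H -> k) : Prop := {
  lam_lin : linform lam;
  lam_one : lam 1 = 1;
  lam_right_int : forall h, \sum_(p <- D h) lam p.2 *: p.1 = lam h *: 1;
  lam_ad : forall h g, \sum_(p <- D h) lam (p.1 * g * S p.2) = e h * lam g
}.

(* modules over H.  act = left action, co b = sum b_{-1} (x) b_0.           *)
(* Bg n = projection of B onto its homogeneous component B_n.               *)
Record YD_graded_bialgebra (H : algType k) (D : H -> tens H H) (e : H -> k)
    (S : H -> H) (B : algType k) (act : H -> B -> B) (co : B -> tens H B)
    (DB : B -> tens B B) (eB : B -> k) (Bg : nat -> B -> B) : Prop := {
  act_lin1 : forall b, linmap (act^~ b);
  act_lin2 : forall h, linmap (act h);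
  act_one : forall b, act 1 b = b;
  act_mul : forall h g b, act (h * g) b = act h (act g b);
  co_lin : tlin co;
  co_coassoc : forall b,
    teq3 [seq (p.1, q.1, q.2) | p <- co b, q <- co p.2]
         [seq (q.1, q.2, p.2) | p <- co b, q <- D p.1];
  co_counit : forall b, \sum_(p <- co b) e p.1 *: p.2 = b;
  YD_compat : forall h b,
    teq (co (act h b))
        [seq (t.1.1 * c.1 * S t.2, act t.1.2 c.2) | t <- D2 D h, c <- co b];
  act_mulB : forall h x y,
    act h (x * y) = \sum_(p <- D h) act p.1 x * act p.2 y;
  act_oneB : forall h, act h 1 = e h *: 1;
  co_mulB : forall x y,
    teq (co (x * y)) [seq (p.1 * q.1, p.2 * q.2) | p <- co x, q <- co y];
  co_oneB : teq (co 1) [:: (1, 1)];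
  DB_lin : tlin DB;
  eB_lin : linform eB;
  DB_coassoc : forall b,
    teq3 [seq (p.1, q.1, q.2) | p <- DB b, q <- DB p.2]
         [seq (q.1, q.2, p.2) | p <- DB b, q <- DB p.1];
  DB_counitl : forall b, \sum_(p <- DB b) eB p.1 *: p.2 = b;
  DB_counitr : forall b, \sum_(p <- DB b) eB p.2 *: p.1 = b;
  DB_act : forall h b,
    teq (DB (act h b)) [seq (act q.1 p.1, act q.2 p.2) | q <- D h, p <- DB b];
  eB_act : forall h b, eB (act h b) = e h * eB b;
  DB_co : forall b,
    teq3 [seq (cd.1.1 * cd.2.1, cd.1.2, cd.2.2)
           | p <- DB b, cd <- [seq (c, d) | c <- co p.1, d <- co p.2]]
         [seq (c.1, q.1, q.2) | c <- co b, q <- DB c.2];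
  eB_co : forall b, \sum_(c <- co b) eB c.2 *: c.1 = eB b *: 1;
  DB_mul : forall x y,
    teq (DB (x * y))
        [seq (p.1 * act cq.1.1 cq.2.1, cq.1.2 * cq.2.2)
           | p <- DB x, cq <- [seq (c, q) | c <- co p.2, q <- DB y]];
  DB_one : teq (DB 1) [:: (1, 1)];
  eB_mul : forall x y, eB (x * y) = eB x * eB y;
  eB_one : eB 1 = 1;
  Bg_lin : forall n, linmap (Bg n);
  Bg_proj : forall m n x, Bg m (Bg n x) = if m == n then Bg n x else 0;
  Bg_fin : forall x, exists N, x = \sum_(n < N) Bg n x;
  Bg_act : forall n h x, Bg n (act h x) = act h (Bg n x);
  Bg_co : forall n x, teq (co (Bg n x)) [seq (p.1, Bg n p.2) | p <- co x];
  Bg_mul : forall m n x y, Bg m x = x -> Bg n y = y -> Bg (m + n) (x * y) = x * y;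
  Bg_one : Bg 0 1 = 1;
  Bg_DB : forall n x, Bg n x = x ->
    teq (DB x) [seq (Bg i p.1, Bg (n - i)%N p.2) | i <- iota 0 n.+1, p <- DB x];
  Bg_eB : forall n x, Bg n x = x -> (0 < n)%N -> eB x = 0;
  Bg_conn : forall x, Bg 0 x = x -> exists c, x = c *: 1
}.

(* The bosonization A = B # H, characterised by: iB : B -> A, b |-> b#1 and  *)
(* iH : H -> A, h |-> 1#h, such that B (x) H -> A, x (x) h |-> (x#1)(1#h) =  *)
(* x#h is a linear isomorphism, with the smash product, smash coproduct,     *)
(* counit and the canonical projection pi.                                  *)
Definition smash (B H A : algType k) (iB : B -> A) (iH : H -> A)
  (t : tens B H) : A := \sum_(p <- t) iB p.1 * iH p.2.

Record bosonization (H : algType k) (D : H -> tens H H) (e : H -> k)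
    (B : algType k) (act : H -> B -> B) (co : B -> tens H B)
    (DB : B -> tens B B) (eB : B -> k)
    (A : algType k) (DA : A -> tens A A) (eA : A -> k)
    (iB : B -> A) (iH : H -> A) (pi : A -> H) : Prop := {
  iB_lin : linmap iB;
  iB_mul : forall x y, iB (x * y) = iB x * iB y;
  iB_one : iB 1 = 1;
  iH_lin : linmap iH;
  iH_mul : forall h g, iH (h * g) = iH h * iH g;
  iH_one : iH 1 = 1;
  smash_surj : forall a, exists t : tens B H, a = smash iB iH t;
  smash_inj : forall t : tens B H, smash iB iH t = 0 -> teq t [::];
  smash_mul : forall h x, iH h * iB x = \sum_(p <- D h) iB (act p.1 x) * iH p.2;
  DA_lin : tlin DA;
  DA_smash : forall x h,
    teq (DA (iB x * iH h))
        [seq (iB p.1 * iH (cq.1.1 * cq.2.1), iB cq.1.2 * iH cq.2.2)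
           | p <- DB x, cq <- [seq (c, q) | c <- co p.2, q <- D h]];
  eA_lin : linform eA;
  eA_smash : forall x h, eA (iB x * iH h) = eB x * e h;
  pi_lin : linmap pi;
  pi_smash : forall x h, pi (iB x * iH h) = eB x *: h
}.

(* A_n = B_n # H *)
Definition Ahom (B H A : algType k) (Bg : nat -> B -> B) (iB : B -> A)
    (iH : H -> A) (n : nat) (a : A) : Prop :=
  exists t : tens B H, all (fun p => Bg n p.1 == p.1) t /\ a = smash iB iH t.

Record Zb2 (A : algType k) (DA : A -> tens A A) (eA : A -> k)
    (F : A -> A -> A) (G : A -> tens A A) : Prop := {
  F_bilin : bilinmap F;
  G_lin : tlin G;
  F_1l : forall b, F 1 b = 0;
  F_1r : forall a, F a 1 = 0;
  eA_F : forall a b, eA (F a b) = 0;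
  G_1 : teq (G 1) [::];
  eA_Gl : forall c, \sum_(q <- G c) eA q.1 *: q.2 = 0;
  eA_Gr : forall c, \sum_(q <- G c) eA q.2 *: q.1 = 0;
  hochschild : forall a b c, a * F b c + F a (b * c) = F (a * b) c + F a b * c;
  coalg_cocycle : forall c,
    teq3 ([seq (p.1, q.1, q.2) | p <- DA c, q <- G p.2]
            ++ [seq (q.1, s.1, s.2) | q <- G c, s <- DA q.2])
         ([seq (s.1, s.2, q.2) | q <- G c, s <- DA q.1]
            ++ [seq (q.1, q.2, p.2) | p <- DA c, q <- G p.1]);
  (* compatibility, with the negative terms moved to the other side *)
  compat : forall a b,
    teq ([seq (F p.1 q.1, p.2 * q.2) | p <- DA a, q <- DA b]
           ++ [seq (p.1 * q.1, F p.2 q.2) | p <- DA a, q <- DA b]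
           ++ [seq (p.1 * s.1, p.2 * s.2) | p <- DA a, s <- G b]
           ++ [seq (s.1 * q.1, s.2 * q.2) | s <- G a, q <- DA b])
        (DA (F a b) ++ G (a * b))
}.

Definition H_bitrivial (B H A : algType k) (Bg : nat -> B -> B) (iB : B -> A)
    (iH : H -> A) (pi : A -> H) (F : A -> A -> A) (G : A -> tens A A) :=
  (forall a b, Ahom Bg iB iH 0 a -> F a b = 0 /\ F b a = 0) /\
  (forall c, teq [seq (pi q.1, q.2) | q <- G c] [::]) /\
  (forall c, teq [seq (q.1, pi q.2) | q <- G c] [::]).

(* (f,g) homogeneous of degree l = -r  (A_m = 0 for m < 0) *)
Definition homog_neg (B H A : algType k) (Bg : nat -> B -> B) (iB : B -> A)
    (iH : H -> A) (r : nat) (F : A -> A -> A) (G : A -> tens A A) :=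
  (forall i j a b, Ahom Bg iB iH i a -> Ahom Bg iB iH j b ->
     if (r <= i + j)%N then Ahom Bg iB iH (i + j - r)%N (F a b) else F a b = 0) /\
  (forall p c, Ahom Bg iB iH p c ->
     exists t : tens A A, teq (G c) t /\
       forall q, q \in t -> exists i j,
         [/\ Ahom Bg iB iH i q.1, Ahom Bg iB iH j q.2 & (i + j + r)%N = p]).

(* The map f : B (x) B -> k: lambda o F on (B (x) B)_r, 0 on other degrees.
   On A_0 = H the projection pi is the identification A_0 = H. *)
Definition f_of (B H A : algType k) (Bg : nat -> B -> B) (iB : B -> A)
    (pi : A -> H) (lam : H -> k) (r : nat) (F : A -> A -> A) (x y : B) : k :=
  \sum_(i < r.+1) lam (pi (F (iB (Bg i x)) (iB (Bg (r - i)%N y)))).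

Definition hochschild_cocycle (B : algType k) (eB : B -> k) (eta : B -> B -> k) :=
  bilin eta /\
  forall a b c, eB a * eta b c - eta (a * b) c + eta a (b * c) - eta a b * eB c = 0.

Definition H_stable (H B : algType k) (D : H -> tens H H) (e : H -> k)
    (act : H -> B -> B) (eta : B -> B -> k) :=
  forall h x y, \sum_(p <- D h) eta (act p.1 x) (act p.2 y) = e h * eta x y.

Definition dc (A : algType k) (DA : A -> tens A A) (ft : A -> A -> k) (a b : A) : A :=
  \sum_(p <- DA a) \sum_(q <- DA b)
     (ft p.2 q.2 *: (p.1 * q.1) - ft p.1 q.1 *: (p.2 * q.2)).

End Tensors.

(* Main.v *)
Require Import Defs.
From HB Require Import structures.
From mathcomp Require Import all_boot all_order all_algebra.
From mathcomp Require boolp classical_sets.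
From mathcomp Require Import ring zify.
From Stdlib Require Import Classical ClassicalEpsilon.
Set Implicit Arguments. Unset Strict Implicit. Unset Printing Implicit Defensive.
Import GRing.Theory.
Local Open Scope ring_scope.
Section Sep.
Variable k : fieldType.
Variable V : lmodType k.
Variable z : V.
Hypothesis z0 : z != 0.

Let T := (V * k)%type.
Definition goodG (G : T -> Prop) :=
  [/\ G (z, 1), (forall v c d, G (v, c) -> G (v, d) -> c = d) &
      (forall a v w c d, G (v, c) -> G (w, d) -> G (a *: v + w, a * c + d))].
Definition PG (G : T -> Prop) := G = (fun _ => False) \/ goodG G.

Lemma goodG0 G : goodG G -> G (0, 0).
Proof.
case=> Gz _ Gl; have := Gl (-1) _ _ _ _ Gz Gz.
by rewrite scaleN1r addNr mulN1r addNr.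
Qed.

Lemma chainP (Fm : (T -> Prop) -> Prop) :
  classical_sets.subset Fm PG -> classical_sets.total_on Fm classical_sets.subset ->
  PG (classical_sets.bigcup Fm (fun X => X)).
Proof.
move=> FP Ftot.
have goodne X : Fm X -> forall t, X t -> goodG X.
  move=> FX t Xt; case: (FP X FX) => // E; by rewrite E in Xt.
case: (classic (exists X, Fm X /\ goodG X)) => [[X0 [FX0 gX0]]|nog].
- right; split.
  + by exists X0 => //; case: gX0.
  + move=> v c d [X1 F1 X1c] [X2 F2 X2d].
    case: (Ftot _ _ F1 F2) => sub.
    * by case: (goodne _ F2 _ X2d) => _ fn _; apply: fn (sub _ X1c) X2d.
    * by case: (goodne _ F1 _ X1c) => _ fn _; apply: fn X1c (sub _ X2d).
  + move=> a v w c d [X1 F1 X1c] [X2 F2 X2d].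
    case: (Ftot _ _ F1 F2) => sub.
    * exists X2 => //; case: (goodne _ F2 _ X2d) => _ _ ln; exact: ln (sub _ X1c) X2d.
    * exists X1 => //; case: (goodne _ F1 _ X1c) => _ _ ln; exact: ln X1c (sub _ X2d).
- left; apply: boolp.funext => t; apply: boolp.propext; split => // -[X FX Xt].
  by apply: nog; exists X; split => //; apply: goodne Xt.
Qed.

Lemma sep_exists : exists l : V -> k, linform l /\ l z = 1.
Proof.
have [Am [PA Amax]] := classical_sets.Zorn_bigcup chainP.
pose G0 := fun p : T => p.1 = p.2 *: z.
have gG0 : goodG G0.
  split; rewrite /G0 /=.
  - by rewrite scale1r.
  - move=> v c d -> /eqP; rewrite -subr_eq0 -scalerBl scaler_eq0 (negbTE z0) orbF.
    by rewrite subr_eq0 => /eqP.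
  - by move=> a v w c d -> ->; rewrite scalerDl scalerA.
have gA : goodG Am.
  case: PA => // EA; exfalso; apply: (Amax G0); last by right.
  rewrite EA; split => //; move/(_ (0, 0)); apply; by rewrite /G0 /= scale0r.
have tot : forall v, exists c, Am (v, c).
  move=> v; apply: NNPP => nv.
  pose B := fun p : T => exists u c a, Am (u, c) /\ p = (u + a *: v, c).
  have A00 := goodG0 gA.
  case: gA => Az Afn Aln.
  apply: (Amax B); last first.
    right; split.
    - by exists z, 1, 0; split => //; rewrite scale0r addr0.
    - move=> w c d [u [c' [a [Au [-> ->]]]]] [u2 [d' [a2 [Au2 E]]]].
      case: E => E1 ->.
      have [ea|nea] := eqVneq a a2.
        by move: E1; rewrite ea => /addIr Eu; rewrite Eu in Au; apply: Afn Au Au2.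
      exfalso; apply: nv; exists ((a - a2)^-1 * (d' - c')).
      have : v = (a - a2)^-1 *: (u2 - u).
        apply: (@scalerI _ _ (a - a2)); first by rewrite subr_eq0.
        rewrite scalerA divff ?subr_eq0 // scale1r scalerBl.
        rewrite -[a *: v](addKr u) E1.
        by rewrite addrA addrK addrC.
      move=> ->.
      have Anu : Am (- u, - c') by have := Aln (-1) _ _ _ _ Au A00; rewrite scaleN1r mulN1r !addr0.
      by have := Aln ((a - a2)^-1) _ _ _ _ (Aln 1 _ _ _ _ Au2 Anu) A00; rewrite !scale1r !mul1r !addr0.
    - move=> b w1 w2 c d [u [c' [a [Au [-> ->]]]]] [u2 [d' [a2 [Au2 [-> ->]]]]].
      exists (b *: u + u2), (b * c' + d'), (b * a + a2); split; first exact: Aln.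
      congr (_, _); rewrite scalerDr scalerDl scalerA.
      by rewrite -!addrA; congr (_ + _); rewrite addrC -addrA; congr (_ + _); rewrite addrC.
  split; rewrite /classical_sets.subset.
  - by move=> [u c] Auc; exists u, c, 0; rewrite scale0r addr0.
  - move=> sub; have [c Avc] : exists c, Am (v, c).
      by exists 0; apply: (sub (v, 0)); exists 0, 0, 1; rewrite scale1r add0r.
    by apply: nv; exists c.
have [l Hl] : exists l : V -> k, forall v, Am (v, l v).
  exists (fun v => proj1_sig (constructive_indefinite_description _ (tot v))).
  by move=> v; case: constructive_indefinite_description.
case: gA => Az Afn Aln.
exists l; split.
- by move=> a x y; apply: Afn (Hl _) (Aln _ _ _ _ _ (Hl x) (Hl y)).
- by apply: Afn (Hl _) Az.
Qed.
End Sep.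

Lemma separation (k : fieldType) (V : lmodType k) (z : V) :
  (forall l : V -> k, linform l -> l z = 0) -> z = 0.
Proof.
move=> H; apply/eqP; apply: contraT => nz.
have [l [ll lz]] := sep_exists nz.
by move: (H l ll); rewrite lz => /eqP; rewrite oner_eq0.
Qed.
Section Gen.
Variable k : fieldType.
Implicit Types V W U M : lmodType k.

Lemma linmap0 V W (f : V -> W) : linmap f -> f 0 = 0.
Proof. by move=> lf; move: (lf 1 0 0); rewrite !scale1r addr0 => E; apply: (@addrI _ (f 0)); rewrite addr0 -E. Qed.
Lemma linmapD V W (f : V -> W) : linmap f -> forall x y, f (x + y) = f x + f y.
Proof. by move=> lf x y; move: (lf 1 x y); rewrite !scale1r. Qed.
Lemma linmapZ V W (f : V -> W) : linmap f -> forall a x, f (a *: x) = a *: f x.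
Proof. by move=> lf a x; move: (lf a x 0); rewrite (linmap0 lf) !addr0. Qed.
Lemma linmapN V W (f : V -> W) : linmap f -> forall x, f (- x) = - f x.
Proof. by move=> lf x; rewrite -scaleN1r (linmapZ lf) scaleN1r. Qed.
Lemma linmapB V W (f : V -> W) : linmap f -> forall x y, f (x - y) = f x - f y.
Proof. by move=> lf x y; rewrite (linmapD lf) (linmapN lf). Qed.
Lemma linmap_sum V W (f : V -> W) I (s : seq I) (g : I -> V) :
  linmap f -> f (\sum_(i <- s) g i) = \sum_(i <- s) f (g i).
Proof.
move=> lf; elim: s => [|i s IH]; first by rewrite !big_nil (linmap0 lf).
by rewrite !big_cons (linmapD lf) IH.
Qed.
Lemma mk_linmap V W (f : V -> W) :
  (forall x y, f (x + y) = f x + f y) -> (forall a x, f (a *: x) = a *: f x) -> linmap f.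
Proof. by move=> hD hZ a x y; rewrite hD hZ. Qed.

Lemma linform_map V (f : V -> k) : linform f -> @linmap k V k^o f.
Proof. by []. Qed.
Lemma linmap_form V (f : V -> k^o) : linmap f -> linform f.
Proof. by []. Qed.

Definition trilinmap U V W M (phi : U -> V -> W -> M) :=
  (forall v w, linmap (fun u => phi u v w)) /\
  (forall u w, linmap (fun v => phi u v w)) /\
  (forall u v, linmap (fun w => phi u v w)).

Lemma lform_sum V (l : V -> k) I (s : seq I) (g : I -> V) :
  linform l -> l (\sum_(i <- s) g i) = \sum_(i <- s) l (g i).
Proof. by move=> ll; apply: (@linmap_sum V k^o). Qed.

Lemma teq_sum V W M (s t : tens V W) (Psi : V -> W -> M) :
  teq s t -> bilinmap Psi ->
  \sum_(p <- s) Psi p.1 p.2 = \sum_(p <- t) Psi p.1 p.2.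
Proof.
move=> st [P1 P2]; apply/eqP; rewrite -subr_eq0; apply/eqP; apply: separation => l ll.
rewrite (@linmapB M k^o _ ll) !(lform_sum _ _ ll); apply/eqP; rewrite subr_eq0; apply/eqP.
apply: (st (fun v w => l (Psi v w))); split.
- by move=> w a x y /=; rewrite (P1 w) ll.
- by move=> v a x y /=; rewrite (P2 v) ll.
Qed.

Lemma teq3_sum U V W M (s t : tens3 U V W) (Psi : U -> V -> W -> M) :
  teq3 s t -> trilinmap Psi ->
  \sum_(p <- s) Psi p.1.1 p.1.2 p.2 = \sum_(p <- t) Psi p.1.1 p.1.2 p.2.
Proof.
move=> st [P1 [P2 P3]]; apply/eqP; rewrite -subr_eq0; apply/eqP; apply: separation => l ll.
rewrite (@linmapB M k^o _ ll) !(lform_sum _ _ ll); apply/eqP; rewrite subr_eq0; apply/eqP.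
apply: (st (fun u v w => l (Psi u v w))); split; [|split].
- by move=> v w a x y /=; rewrite (P1 v w) ll.
- by move=> u w a x y /=; rewrite (P2 u w) ll.
- by move=> u v a x y /=; rewrite (P3 u v) ll.
Qed.

Lemma tlin_sum V W U M (f : V -> tens W U) (Psi : W -> U -> M) :
  tlin f -> bilinmap Psi -> linmap (fun x => \sum_(p <- f x) Psi p.1 p.2).
Proof.
move=> lf bP a x y; rewrite (teq_sum (lf a x y) bP) big_cat /= big_map.
rewrite scaler_sumr; congr (_ + _); apply: eq_bigr => p _ /=.
by case: bP => P1 _; rewrite (linmapZ (P1 _)).
Qed.

Lemma bilinmap_sym V W M (Psi : V -> W -> M) :
  bilinmap Psi -> bilinmap (fun w v => Psi v w).
Proof. by case. Qed.

End Gen.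

Section GenP.
Variable k : fieldType.
Lemma teq_sumP (V W M : lmodType k) (s t : tens V W) (Phi : V * W -> M) :
  teq s t -> bilinmap (fun a b => Phi (a, b)) ->
  \sum_(p <- s) Phi p = \sum_(p <- t) Phi p.
Proof.
move=> st bP; have := teq_sum st bP.
have E : forall u : tens V W, \sum_(p <- u) Phi (p.1, p.2) = \sum_(p <- u) Phi p.
  by move=> u; apply: eq_bigr => -[].
by rewrite !E.
Qed.
Lemma teq3_sumP (U V W M : lmodType k) (s t : tens3 U V W) (Phi : U * V * W -> M) :
  teq3 s t -> trilinmap (fun a b c => Phi (a, b, c)) ->
  \sum_(p <- s) Phi p = \sum_(p <- t) Phi p.
Proof.
move=> st bP; have := teq3_sum st bP.
have E : forall u : tens3 U V W, \sum_(p <- u) Phi (p.1.1, p.1.2, p.2) = \sum_(p <- u) Phi p.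
  by move=> u; apply: eq_bigr => -[[]].
by rewrite !E.
Qed.
End GenP.
Section LinTac.
Variable k : fieldType.
Implicit Types V W U M : lmodType k.

Lemma lin_id V : linmap (fun x : V => x).
Proof. by []. Qed.
Lemma lin_sum V M I (s : seq I) (G : V -> I -> M) :
  (forall i, linmap (fun x => G x i)) -> linmap (fun x => \sum_(i <- s) G x i).
Proof.
move=> lG a x y; rewrite scaler_sumr -big_split; apply: eq_bigr => i _; exact: lG.
Qed.
Lemma lin_tlin V W U (X : lmodType k) M (f : X -> tens W U) (Phi : W * U -> M) (A : V -> X) :
  tlin f -> bilinmap (fun a b => Phi (a, b)) -> linmap A ->
  linmap (fun x => \sum_(p <- f (A x)) Phi p).
Proof.
move=> lf bP lA a x y; rewrite lA.
have := tlin_sum lf bP a (A x) (A y); rewrite /=.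
have E : forall z, \sum_(p <- f z) Phi p = \sum_(p <- f z) Phi (p.1, p.2).
  by move=> z; apply: eq_bigr => -[].
by rewrite !E.
Qed.
Lemma lin_add V M (P Q : V -> M) : linmap P -> linmap Q -> linmap (fun x => P x + Q x).
Proof. by move=> lP lQ a x y; rewrite lP lQ scalerDr addrACA. Qed.
Lemma lin_opp V M (P : V -> M) : linmap P -> linmap (fun x => - P x).
Proof. by move=> lP a x y; rewrite lP opprD scalerN. Qed.
Lemma lin_sub V M (P Q : V -> M) : linmap P -> linmap Q -> linmap (fun x => P x - Q x).
Proof. by move=> lP lQ; apply: lin_add => //; apply: lin_opp. Qed.
Lemma lin_scale V M (c : k) (P : V -> M) : linmap P -> linmap (fun x => c *: P x).
Proof. by move=> lP a x y; rewrite lP scalerDr !scalerA mulrC. Qed.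
Lemma lin_scalel V M (l : V -> k) (v : M) : linform l -> linmap (fun x => l x *: v).
Proof. by move=> ll a x y; rewrite ll scalerDl scalerA. Qed.
Lemma lin_comp V W M (f : W -> M) (P : V -> W) : linmap f -> linmap P -> linmap (fun x => f (P x)).
Proof. by move=> lf lP a x y; rewrite lP lf. Qed.
Lemma lin_mull V (R : algType k) (c : R) (P : V -> R) : linmap P -> linmap (fun x => c * P x).
Proof. by move=> lP a x y; rewrite lP mulrDr scalerAr. Qed.
Lemma lin_mulr V (R : algType k) (c : R) (P : V -> R) : linmap P -> linmap (fun x => P x * c).
Proof. by move=> lP a x y; rewrite lP mulrDl scalerAl. Qed.
Lemma lin_kmull V (c : k) (P : V -> k) : linform P -> linform (fun x => c * P x).
Proof. by move=> lP a x y; rewrite lP mulrDr !mulrA (mulrC c). Qed.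
Lemma lin_kmulr V (c : k) (P : V -> k) : linform P -> linform (fun x => P x * c).
Proof. by move=> lP a x y; rewrite lP mulrDl mulrA. Qed.
Lemma form_comp V W (f : W -> k) (P : V -> W) : linform f -> linmap P -> linform (fun x => f (P x)).
Proof. by move=> lf lP a x y; rewrite lP lf. Qed.
Lemma form_add V (P Q : V -> k) : linform P -> linform Q -> linform (fun x => P x + Q x).
Proof. by move=> lP lQ a x y; rewrite lP lQ mulrDr addrACA. Qed.
Lemma form_sum V I (s : seq I) (G : V -> I -> k) :
  (forall i, linform (fun x => G x i)) -> linform (fun x => \sum_(i <- s) G x i).
Proof. by move=> lG; apply: (@lin_sum V k^o). Qed.
Lemma bilin_of V W M (Psi : V -> W -> M) :
  (forall w, linmap (fun v => Psi v w)) -> (forall v, linmap (fun w => Psi v w)) -> bilinmap Psi.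
Proof. by split. Qed.
Lemma bilinform_of V W (Psi : V -> W -> k) :
  (forall w, linform (fun v => Psi v w)) -> (forall v, linform (fun w => Psi v w)) -> bilin Psi.
Proof. by split. Qed.
Lemma trilin_of U V W M (Psi : U -> V -> W -> M) :
  (forall v w, linmap (fun u => Psi u v w)) -> (forall u w, linmap (fun v => Psi u v w)) ->
  (forall u v, linmap (fun w => Psi u v w)) -> trilinmap Psi.
Proof. by split. Qed.
Lemma bil1 V W M (Psi : V -> W -> M) : bilinmap Psi -> forall w, linmap (fun v => Psi v w).
Proof. by case. Qed.
Lemma bil2 V W M (Psi : V -> W -> M) : bilinmap Psi -> forall v, linmap (fun w => Psi v w).
Proof. by case. Qed.
Lemma bilf1 V W (Psi : V -> W -> k) : bilin Psi -> forall w, linform (fun v => Psi v w).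
Proof. by case. Qed.
Lemma bilf2 V W (Psi : V -> W -> k) : bilin Psi -> forall v, linform (fun w => Psi v w).
Proof. by case. Qed.
Lemma bilP1 V W M (Phi : V * W -> M) : bilinmap (fun a b => Phi (a, b)) -> forall w, linmap (fun v => Phi (v, w)).
Proof. by case. Qed.
Lemma bilP2 V W M (Phi : V * W -> M) : bilinmap (fun a b => Phi (a, b)) -> forall v, linmap (fun w => Phi (v, w)).
Proof. by case. Qed.
Lemma lin_idf V : linmap (@id V).
Proof. by []. Qed.
Lemma lin_mulc (R : algType k) (c : R) : linmap (GRing.mul c).
Proof. by move=> a x y; rewrite mulrDr scalerAr. Qed.
End LinTac.

Create HintDb lindb.
Hint Resolve lin_idf lin_mulc : lindb.

Ltac linbase := first [ solve [eauto with lindb]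
  | solve [apply: bilP1; eassumption] | solve [apply: bilP2; eassumption]
  | solve [apply: bil1; eassumption] | solve [apply: bil2; eassumption]
  | solve [apply: bilf1; eassumption] | solve [apply: bilf2; eassumption]
  | match goal with Hh : forall _ _, bilinmap _ |- _ => solve [apply: (bil1 (Hh _ _))] end
  | match goal with Hh : forall _ _, bilinmap _ |- _ => solve [apply: (bil2 (Hh _ _))] end ].

Ltac linsolve :=
  cbv beta; cbn [fst snd];
  lazymatch goal with
  | |- forall _, _ => intros; linsolve
  | |- bilinmap _ => apply: bilin_of => ?; linsolve
  | |- bilin _ => apply: bilinform_of => ?; linsolve
  | |- trilinmap _ => apply: trilin_of => ? ?; linsolve
  | |- linform (fun x => _) => linsolve_form
  | |- linform _ => linbase
  | |- linmap (fun x => _) => linsolve_map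
  | |- linmap _ => linbase
  end
with linsolve_map :=
  first
  [ exact: lin_id
  | linbase
  | apply: lin_add; linsolve
  | apply: lin_sub; linsolve
  | apply: lin_opp; linsolve
  | apply: lin_sum => ?; linsolve
  | apply: lin_tlin; [solve [eauto with lindb] | linsolve | linsolve]
  | apply: lin_scalel; linsolve
  | apply: lin_scale; linsolve
  | apply: lin_mull; linsolve
  | apply: lin_mulr; linsolve
  | match goal with
    | |- linmap (fun x => ?f (@?P x, ?w)) =>
        apply: (@lin_comp _ _ _ _ (fun a => f (a, w)) P); [linbase | linsolve]
    | |- linmap (fun x => ?f (?w, @?P x)) =>
        apply: (@lin_comp _ _ _ _ (fun a => f (w, a)) P); [linbase | linsolve]
    | |- linmap (fun x => ?f (@?P x) ?w) =>
        apply: (@lin_comp _ _ _ _ (fun a => f a w) P); [linbase | linsolve]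
    | |- linmap (fun x => ?f ?w (@?P x)) =>
        apply: (@lin_comp _ _ _ _ (fun a => f w a) P); [linbase | linsolve]
    | |- linmap (fun x => ?f (@?P x)) =>
        apply: (@lin_comp _ _ _ _ f P); [linbase | linsolve]
    end ]
with linsolve_form :=
  first
  [ linbase
  | apply: form_add; linsolve
  | apply: form_sum => ?; linsolve
  | apply: lin_kmull; linsolve
  | apply: lin_kmulr; linsolve
  | match goal with
    | |- linform (fun x => ?f (@?P x) ?w) =>
        apply: (@form_comp _ _ _ (fun a => f a w) P); [linbase | linsolve]
    | |- linform (fun x => ?f ?w (@?P x)) =>
        apply: (@form_comp _ _ _ (fun a => f w a) P); [linbase | linsolve]
    | |- linform (fun x => ?f (@?P x)) =>
        apply: (@form_comp _ _ _ f P); [linbase | linsolve]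
    end ].
Section Main.
Variable k : fieldType.
Variables (H : algType k) (D : H -> tens H H) (e : H -> k) (S : H -> H).
Hypothesis hH : hopf_algebra D e S.
Variables (lam : H -> k).
Hypothesis hlam : integral_cond D e S lam.
Variables (B : algType k) (act : H -> B -> B) (co : B -> tens H B)
  (DB : B -> tens B B) (eB : B -> k) (Bg : nat -> B -> B).
Hypothesis hB : YD_graded_bialgebra D e S act co DB eB Bg.
Variables (A : algType k) (DA : A -> tens A A) (eA : A -> k)
  (iB : B -> A) (iH : H -> A) (pi : A -> H).
Hypothesis hA : bosonization D e act co DB eB DA eA iB iH pi.
Variables (r : nat) (F : A -> A -> A) (G : A -> tens A A).
Hypothesis hFG : Zb2 DA eA F G.
Hypothesis hbitriv : H_bitrivial Bg iB iH pi F G.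
Hypothesis hdeg : homog_neg Bg iB iH r F G.

Lemma iB_l : linmap iB. Proof. exact: iB_lin hA. Qed.
Lemma iH_l : linmap iH. Proof. exact: iH_lin hA. Qed.
Lemma pi_l : linmap pi. Proof. exact: pi_lin hA. Qed.
Lemma act_l1 b : linmap (fun h => act h b). Proof. exact: (act_lin1 hB b). Qed.
Lemma act_l2 h : linmap (act h). Proof. exact: (act_lin2 hB h). Qed.
Lemma Bg_l n : linmap (Bg n). Proof. exact: (Bg_lin hB n). Qed.
Lemma S_l : linmap S. Proof. exact: hS_lin hH. Qed.
Lemma F_l1 v : linmap (fun u => F u v). Proof. by case: (F_bilin hFG). Qed.
Lemma F_l2 u : linmap (F u). Proof. by case: (F_bilin hFG). Qed.
Lemma eB_l : linform eB. Proof. exact: eB_lin hB. Qed.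
Lemma e_l : linform e. Proof. exact: he_lin hH. Qed.
Lemma lam_l : linform lam. Proof. exact: lam_lin hlam. Qed.
Lemma eA_l : linform eA. Proof. exact: eA_lin hA. Qed.
Lemma D_tl : tlin D. Proof. exact: hD_lin hH. Qed.
Lemma co_tl : tlin co. Proof. exact: co_lin hB. Qed.
Lemma DB_tl : tlin DB. Proof. exact: DB_lin hB. Qed.
Lemma DA_tl : tlin DA. Proof. exact: DA_lin hA. Qed.
Lemma G_tl : tlin G. Proof. exact: G_lin hFG. Qed.

Hint Resolve iB_l iH_l pi_l act_l1 act_l2 Bg_l S_l F_l1 F_l2 eB_l e_l lam_l eA_l
  D_tl co_tl DB_tl DA_tl G_tl bil1 bil2 bilf1 bilf2 bilP1 bilP2 : lindb.


Lemma iBD x y : iB (x + y) = iB x + iB y. Proof. exact: (linmapD iB_l x y). Qed.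
Lemma iBZ a x : iB (a *: x) = a *: iB x. Proof. exact: (linmapZ iB_l a x). Qed.
Lemma iHD x y : iH (x + y) = iH x + iH y. Proof. exact: (linmapD iH_l x y). Qed.
Lemma iHZ a x : iH (a *: x) = a *: iH x. Proof. exact: (linmapZ iH_l a x). Qed.
Lemma piD x y : pi (x + y) = pi x + pi y. Proof. exact: (linmapD pi_l x y). Qed.
Lemma piZ a x : pi (a *: x) = a *: pi x. Proof. exact: (linmapZ pi_l a x). Qed.
Lemma lamZ a x : lam (a *: x) = a * lam x. Proof. exact: (@linmapZ _ _ k^o _ lam_l a x). Qed.
Lemma eBZ a x : eB (a *: x) = a * eB x. Proof. exact: (@linmapZ _ _ k^o _ eB_l a x). Qed.
Lemma eZ a x : e (a *: x) = a * e x. Proof. exact: (@linmapZ _ _ k^o _ e_l a x). Qed.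
Lemma iB1 : iB 1 = 1. Proof. exact: iB_one hA. Qed.
Lemma iH1 : iH 1 = 1. Proof. exact: iH_one hA. Qed.
Lemma iBM x y : iB (x * y) = iB x * iB y. Proof. exact: (iB_mul hA x y). Qed.
Lemma iHM x y : iH (x * y) = iH x * iH y. Proof. exact: (iH_mul hA x y). Qed.
Lemma eB1 : eB 1 = 1. Proof. exact: eB_one hB. Qed.
Lemma eBM x y : eB (x * y) = eB x * eB y. Proof. exact: (eB_mul hB x y). Qed.
Lemma eM x y : e (x * y) = e x * e y. Proof. exact: (he_mul hH x y). Qed.
Lemma e1 : e 1 = 1. Proof. exact: he_one hH. Qed.

Lemma smash1 x : iB x * iH 1 = iB x. Proof. by rewrite iH1 mulr1. Qed.
Lemma smash1l h : iB 1 * iH h = iH h. Proof. by rewrite iB1 mul1r. Qed.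
Lemma pi_iB x : pi (iB x) = eB x *: 1.
Proof. by rewrite -smash1 (pi_smash hA). Qed.
Lemma pi_iH h : pi (iH h) = h.
Proof. by rewrite -smash1l (pi_smash hA) eB1 scale1r. Qed.

Lemma sum_lin (X M : lmodType k) (f : X -> M) I (s : seq I) (w : I -> k) (g : I -> X) :
  linmap f -> \sum_(i <- s) w i *: f (g i) = f (\sum_(i <- s) w i *: g i).
Proof. by move=> lf; rewrite (linmap_sum _ _ lf); apply: eq_bigr => i _; rewrite (linmapZ lf). Qed.

Lemma sum1 (V W M : lmodType k) (Phi : V * W -> M) x y :
  \sum_(p <- [:: (x, y)]) Phi p = Phi (x, y).
Proof. by rewrite big_cons big_nil addr0. Qed.

Lemma smash_mulE h x : iH h * iB x = \sum_(p <- D h) iB (act p.1 x) * iH p.2.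
Proof. exact: (smash_mul hA h x). Qed.

Lemma piM1 x h y g : pi (iB x * iH h * (iB y * iH g)) = pi (iB x * iH h) * pi (iB y * iH g).
Proof.
rewrite !(pi_smash hA) -scalerAl -scalerAr scalerA.
rewrite mulrA -(mulrA (iB x)) smash_mulE mulr_sumr mulr_suml (linmap_sum _ _ pi_l).
under eq_bigr => p _ do rewrite mulrA -iBM -mulrA -iHM (pi_smash hA) eBM (eB_act hB).
rewrite -[X in _ = _ *: (X * g)](hD_counitl hH h) mulr_suml scaler_sumr.
by apply: eq_bigr => p _; rewrite -scalerAl scalerA; congr (_ *: _); ring.
Qed.

Lemma smashE t : smash iB iH t = \sum_(p <- t) iB p.1 * iH p.2.
Proof. by []. Qed.

Lemma piM u v : pi (u * v) = pi u * pi v.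
Proof.
have [t ->] := smash_surj hA u; have [t' ->] := smash_surj hA v.
rewrite !smashE mulr_suml (linmap_sum _ _ pi_l) (linmap_sum _ _ pi_l) mulr_suml.
apply: eq_bigr => p _; rewrite big_distrr !(linmap_sum _ _ pi_l) big_distrr.
by apply: eq_bigr => q _; rewrite piM1.
Qed.

Lemma BgB m n x : Bg m (Bg n x) = if m == n then Bg n x else 0.
Proof. exact: (Bg_proj hB m n x). Qed.
Lemma Bgidem n x : Bg n (Bg n x) = Bg n x.
Proof. by rewrite BgB eqxx. Qed.

Lemma Bg_high x : exists N, forall M, (N <= M)%N -> x = \sum_(m < M) Bg m x.
Proof.
have [N EN] := Bg_fin hB x; exists N => M le.
have z m : (N <= m)%N -> Bg m x = 0.
  move=> lm; rewrite EN (linmap_sum _ _ (Bg_l m)) big1 // => n _.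
  rewrite BgB; case: eqP => [E|//]; move: (ltn_ord n); rewrite -E; lia.
rewrite {1}EN (big_ord_widen M (fun m => Bg m x) le) big_mkcond /=.
apply: eq_bigr => m _; case: ifP => // /negbT; rewrite -leqNgt => /z ->; by [].
Qed.

Lemma eB_Bg n u : eB (Bg n u) = if n == 0%N then eB u else 0.
Proof.
case: eqP => [->|/eqP nz]; last first.
  apply: (Bg_eB hB); [exact: Bgidem | by rewrite lt0n].
have [N EN] := Bg_high u.
have E := EN N.+1 (leqnSn _).
rewrite {2}E (lform_sum _ _ eB_l) big_ord_recl /= big1 ?addr0 // => m _.
by apply: (Bg_eB hB); [exact: Bgidem | by []].
Qed.

Lemma Bg0E u : Bg 0 u = eB u *: 1.
Proof.
have [c Ec] := Bg_conn hB (Bgidem 0 (u)).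
by have := eB_Bg 0 u; rewrite /= Ec eBZ eB1 mulr1 => ->.
Qed.

Lemma Ahom_iB i x : Bg i x = x -> Ahom Bg iB iH i (iB x).
Proof.
move=> Ex; exists [:: (x, 1)]; split; first by rewrite /= Ex eqxx.
by rewrite smashE sum1 smash1.
Qed.
Lemma Ahom_iH h : Ahom Bg iB iH 0 (iH h).
Proof.
exists [:: (1, h)]; split; first by rewrite /= (Bg_one hB) eqxx.
by rewrite smashE sum1 smash1l.
Qed.
Lemma Ahom0E z : Ahom Bg iB iH 0 z -> z = iH (pi z).
Proof.
move=> [t [/allP Ht ->]]; rewrite smashE (linmap_sum _ _ pi_l) (linmap_sum _ _ iH_l).
apply: eq_big_seq => p /Ht /eqP E; rewrite (pi_smash hA) iHZ -{1}E Bg0E iBZ iB1.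
by rewrite -scalerAl mul1r.
Qed.
Lemma Ahom_pi n z : (0 < n)%N -> Ahom Bg iB iH n z -> pi z = 0.
Proof.
move=> n0 [t [/allP Ht ->]]; rewrite smashE (linmap_sum _ _ pi_l) big1_seq // => p /Ht /eqP E.
by rewrite (pi_smash hA) (Bg_eB hB E n0) scale0r.
Qed.

Lemma F_deg m n u v : Bg m u = u -> Bg n v = v -> (m + n != r)%N -> pi (F (iB u) (iB v)) = 0.
Proof.
move=> Eu Ev ne; have := (hdeg.1 m n _ _ (Ahom_iB Eu) (Ahom_iB Ev)).
case: ifP => [le|_ ->]; last exact: (linmap0 pi_l).
by apply: Ahom_pi; lia.
Qed.

Notation fB := (f_of Bg iB pi lam r F).

Lemma f_E x y : fB x y = lam (pi (F (iB x) (iB y))).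
Proof.
have [Nx Ex] := Bg_high x; have [Ny Ey] := Bg_high y.
set N := maxn (maxn Nx Ny) r.+1.
have ex : x = \sum_(m < N) Bg m x by apply: Ex; rewrite /N; lia.
have ey : y = \sum_(m < N) Bg m y by apply: Ey; rewrite /N; lia.
rewrite [in RHS]ex [in RHS]ey.
rewrite (linmap_sum _ _ iB_l) (linmap_sum _ _ (F_l1 _)) (linmap_sum _ _ pi_l) (lform_sum _ _ lam_l).
have gN : (r.+1 <= N)%N by rewrite /N; lia.
rewrite /f_of (big_ord_widen N (fun i => lam (pi (F (iB (Bg i _)) (iB (Bg (r - i) _))))) gN).
rewrite big_mkcond /=; apply: eq_bigr => i _.
rewrite (linmap_sum _ _ iB_l) (linmap_sum _ _ (F_l2 _)) (linmap_sum _ _ pi_l) (lform_sum _ _ lam_l).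
case: ifP => lir.
- have ltN : (r - i < N)%N by rewrite /N; lia.
  rewrite (bigD1 (Ordinal ltN)) //=.
  rewrite big1 ?addr0 // => j nj.
  rewrite (@F_deg i j) ?Bgidem //; first by rewrite -(scale0r (0 : H)) lamZ mul0r.
  apply/negP => /eqP E; move: nj; apply/negP/negPn/eqP; apply: val_inj => /=; lia.
- apply/esym/big1 => j _.
  rewrite (@F_deg i j) ?Bgidem //; first by rewrite -(scale0r (0 : H)) lamZ mul0r.
  lia.
Qed.

Lemma part0 i j x y : Bg i x = x -> Bg j y = y -> (i + j)%N = r ->
  Ahom Bg iB iH 0 (F (iB x) (iB y)).
Proof.
move=> Ex Ey E; have := hdeg.1 i j _ _ (Ahom_iB Ex) (Ahom_iB Ey).
by rewrite E leqnn subnn.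
Qed.

Lemma F_H0l h v : F (iH h) v = 0. Proof. exact: (hbitriv.1 _ v (Ahom_iH h)).1. Qed.
Lemma F_H0r u h : F u (iH h) = 0. Proof. exact: (hbitriv.1 _ u (Ahom_iH h)).2. Qed.
Lemma Fa h u v : F (iH h * u) v = iH h * F u v.
Proof. by have := hochschild hFG (iH h) u v; rewrite !F_H0l mul0r !addr0 => ->. Qed.
Lemma Fb u h v : F (u * iH h) v = F u (iH h * v).
Proof. by have := hochschild hFG u (iH h) v; rewrite F_H0l F_H0r mulr0 mul0r add0r addr0. Qed.
Lemma Fc u v h : F u (v * iH h) = F u v * iH h.
Proof. by have := hochschild hFG u v (iH h); rewrite !F_H0r mulr0 add0r => ->; rewrite add0r. Qed.

Lemma FD1 u u' v : F (u + u') v = F u v + F u' v. Proof. exact: (linmapD (F_l1 v)). Qed.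
Lemma FD2 u v v' : F u (v + v') = F u v + F u v'. Proof. exact: (linmapD (F_l2 u)). Qed.
Lemma lamD x y : lam (x + y) = lam x + lam y. Proof. exact: (@linmapD _ _ k^o _ lam_l). Qed.

Lemma linform_ext (V : lmodType k) (f g : V -> k) : (forall x, f x = g x) -> linform g -> linform f.
Proof. by move=> E lg a x y; rewrite !E. Qed.

Lemma fB_bilin : bilin fB.
Proof.
split=> w; apply: (linform_ext (g := fun v => _)) => [v|]; try (by rewrite f_E); linsolve.
Qed.

Lemma fB_cocycle : hochschild_cocycle eB fB.
Proof.
split; first exact: fB_bilin.
move=> a b c; rewrite !f_E !iBM.
have := hochschild hFG (iB a) (iB b) (iB c).
move/(congr1 (fun z => lam (pi z))); rewrite !piD !lamD !piM !pi_iB.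
rewrite -scalerAl -scalerAr mul1r mulr1 !lamZ => E.
have -> : eB a * lam (pi (F (iB b) (iB c))) - lam (pi (F (iB a * iB b) (iB c))) +
  lam (pi (F (iB a) (iB b * iB c))) - lam (pi (F (iB a) (iB b))) * eB c =
  (eB a * lam (pi (F (iB b) (iB c))) + lam (pi (F (iB a) (iB b * iB c)))) -
  (lam (pi (F (iB a * iB b) (iB c))) + eB c * lam (pi (F (iB a) (iB b)))) by ring.
by rewrite E subrr.
Qed.

Lemma coassocL (M : lmodType k) (Phi : H -> H -> H -> M) : trilinmap Phi -> forall h,
  \sum_(p <- D h) \sum_(q <- D p.1) Phi q.1 q.2 p.2 =
  \sum_(p <- D h) \sum_(q <- D p.2) Phi p.1 q.1 q.2.
Proof.
move=> tP h.
have E1 := big_allpairs_dep (op := +%R) (idx := 0) (h := fun p q => (q.1, q.2, p.2)) (r1 := D h)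
   (r2 := fun p => D p.1) (F := fun P : H * H * H => Phi P.1.1 P.1.2 P.2).
have E2 := big_allpairs_dep (op := +%R) (idx := 0) (h := fun p q => (p.1, q.1, q.2)) (r1 := D h)
   (r2 := fun p => D p.2) (F := fun P : H * H * H => Phi P.1.1 P.1.2 P.2).
simpl in E1, E2; rewrite -E1 -E2.
by symmetry; apply: (teq3_sumP (hD_coassoc hH h)).
Qed.

Lemma DcounitR (M : lmodType k) (f : H -> M) h : linmap f ->
  \sum_(q <- D h) e q.2 *: f q.1 = f h.
Proof. by move=> lf; rewrite (sum_lin _ _ _ lf) (hD_counitr hH). Qed.
Lemma DcounitL (M : lmodType k) (f : H -> M) h : linmap f ->
  \sum_(q <- D h) e q.1 *: f q.2 = f h.
Proof. by move=> lf; rewrite (sum_lin _ _ _ lf) (hD_counitl hH). Qed.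

Lemma HS_A h x y :
  \sum_(p <- D h) F (iB (act p.1 x)) (iB (act p.2 y)) =
  \sum_(p <- D h) iH p.1 * F (iB x) (iB y) * iH (S p.2).
Proof.
pose Psi a b c := F (iB (act a x)) (iB (act b y) * iH c).
have tPsi : trilinmap Psi by rewrite /Psi; linsolve.
have step : forall p : H * H, iH p.1 * F (iB x) (iB y) * iH (S p.2) =
    \sum_(q <- D p.1) \sum_(s <- D q.2) Psi q.1 s.1 (s.2 * S p.2).
  move=> p; rewrite -Fa -Fc smash_mulE (linmap_sum _ _ (F_l1 _)).
  apply: eq_bigr => q _; rewrite Fb mulrA smash_mulE big_distrl /= (linmap_sum _ _ (F_l2 _)).
  by apply: eq_bigr => s _; rewrite /Psi -mulrA -iHM.
rewrite (eq_bigr _ (fun p _ => step p)).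
rewrite (coassocL (Phi := fun a b c => \sum_(s <- D b) Psi a s.1 (s.2 * S c))); last first.
  rewrite /Psi; linsolve.
apply: eq_bigr => p _.
rewrite (coassocL (Phi := fun a b c => Psi p.1 a (b * S c))); last by rewrite /Psi; linsolve.
have E : forall q : H * H, \sum_(s <- D q.2) Psi p.1 q.1 (s.1 * S s.2) = e q.2 *: Psi p.1 q.1 1.
  move=> q; rewrite -(linmap_sum _ _ (lin_comp (bil2 (F_bilin hFG) _) (lin_mull _ iH_l))).
  by rewrite (hS_right hH) /Psi iHZ -scalerAr (linmapZ (F_l2 _)).
rewrite (eq_bigr _ (fun q _ => E q)).
rewrite (DcounitR (f := fun b => Psi p.1 b 1)); last by rewrite /Psi; linsolve.
by rewrite /Psi smash1.
Qed.

Lemma fB_Hstable : H_stable D e act fB.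
Proof.
move=> h x y.
have E1 : \sum_(p <- D h) fB (act p.1 x) (act p.2 y) =
          lam (pi (\sum_(p <- D h) F (iB (act p.1 x)) (iB (act p.2 y)))).
  rewrite (linmap_sum _ _ pi_l) (lform_sum _ _ lam_l); apply: eq_bigr => p _; exact: f_E.
rewrite E1 HS_A (linmap_sum _ _ pi_l) (lform_sum _ _ lam_l) f_E -(lam_ad hlam).
by apply: eq_bigr => p _; rewrite !piM !pi_iH.
Qed.

Lemma DA_sm (M : lmodType k) (Phi : A * A -> M) x h :
  bilinmap (fun a b => Phi (a, b)) ->
  \sum_(p <- DA (iB x * iH h)) Phi p =
  \sum_(p <- DB x) \sum_(c <- co p.2) \sum_(q <- D h)
     Phi (iB p.1 * iH (c.1 * q.1), iB c.2 * iH q.2).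
Proof.
move=> bP; rewrite (teq_sumP (DA_smash hA x h) bP) big_allpairs_dep.
by apply: eq_bigr => p _; rewrite big_allpairs_dep.
Qed.

Lemma DA_iB (M : lmodType k) (Phi : A * A -> M) x :
  bilinmap (fun a b => Phi (a, b)) ->
  \sum_(p <- DA (iB x)) Phi p =
  \sum_(p <- DB x) \sum_(c <- co p.2) Phi (iB p.1 * iH c.1, iB c.2).
Proof.
move=> bP; rewrite -{1}(smash1 x) DA_sm //; apply: eq_bigr => p _; apply: eq_bigr => c _.
rewrite (teq_sumP (hD_one hH)) ?sum1 /= ?mulr1 ?smash1 //.
linsolve.
Qed.

Lemma DA_iH (M : lmodType k) (Phi : A * A -> M) g :
  bilinmap (fun a b => Phi (a, b)) ->
  \sum_(p <- DA (iH g)) Phi p = \sum_(q <- D g) Phi (iH q.1, iH q.2).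
Proof.
move=> bP; rewrite -{1}(smash1l g) DA_sm //.
rewrite (teq_sumP (DB_one hB)); last by linsolve.
rewrite sum1 /= (teq_sumP (co_oneB hB)); last by linsolve.
by rewrite sum1 /=; apply: eq_bigr => q _; rewrite !mul1r !smash1l.
Qed.

Lemma Gpi2 (M : lmodType k) (Th : A -> H -> M) c : bilinmap Th ->
  \sum_(s <- G c) Th s.1 (pi s.2) = 0.
Proof.
move=> bT; have := teq_sumP (hbitriv.2.2 c) (Phi := fun P => Th P.1 P.2).
by rewrite big_map big_nil => ->.
Qed.

Lemma eB_coE (M : lmodType k) (f : H -> M) b : linmap f ->
  \sum_(c <- co b) eB c.2 *: f c.1 = eB b *: f 1.
Proof. by move=> lf; rewrite (sum_lin _ _ _ lf) (eB_co hB) (linmapZ lf). Qed.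

Lemma DAiB_pi (M : lmodType k) (Th : A -> H -> M) x : bilinmap Th ->
  \sum_(p <- DA (iB x)) Th p.1 (pi p.2) = Th (iB x) 1.
Proof.
move=> bT; rewrite (DA_iB (Phi := fun P => Th P.1 (pi P.2))); last by linsolve.
have E : forall p : B * B, \sum_(c <- co p.2) Th (iB p.1 * iH c.1) (pi (iB c.2)) =
   eB p.2 *: Th (iB p.1) 1.
  move=> p; rewrite -(smash1 p.1) -(eB_coE (f := fun h => Th (iB p.1 * iH h) 1)); last by linsolve.
  apply: eq_bigr => c _; rewrite pi_iB (linmapZ (bil2 bT _)).
  by rewrite smash1.
rewrite (eq_bigr _ (fun p _ => E p)) (sum_lin _ _ _ (bil1 bT 1)).
rewrite (sum_lin (f := iB)) ?(DB_counitr hB) //; exact: iB_l.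
Qed.

Lemma DB_dec (M : lmodType k) (Phi : B * B -> M) i x : Bg i x = x ->
  bilinmap (fun a b => Phi (a, b)) ->
  \sum_(p <- DB x) Phi p = \sum_(a <- iota 0 i.+1) \sum_(p <- DB x) Phi (Bg a p.1, Bg (i - a) p.2).
Proof. by move=> Ex bP; rewrite (teq_sumP (Bg_DB hB Ex) bP) big_allpairs_dep. Qed.

Lemma DB1R (M : lmodType k) (Phi : B * B -> M) i x : Bg i x = x ->
  bilinmap (fun a b => Phi (a, b)) ->
  (forall u m v, (m < i)%N -> Phi (u, Bg m v) = 0) ->
  \sum_(p <- DB x) Phi p = Phi (1, x).
Proof.
move=> Ex bP Z; rewrite (DB_dec Ex bP) /= big_cons [X in _ + X]big1_seq ?addr0; last first.
  move=> a /andP [_]; rewrite mem_iota => /andP [a1 a2]; apply: big1 => p _; apply: Z; lia.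
under eq_bigr => p _ do rewrite Bg0E subn0.
have E : forall p : B * B, Phi (eB p.1 *: 1, Bg i p.2) = eB p.1 *: Phi (1, Bg i p.2).
  by move=> p; rewrite (linmapZ (bil1 bP _)).
rewrite (eq_bigr _ (fun p _ => E p)).
rewrite (sum_lin (f := fun v => Phi (1, Bg i v))); last by linsolve.
by rewrite (DB_counitl hB) Ex.
Qed.

Lemma DB1L (M : lmodType k) (Phi : B * B -> M) i x : Bg i x = x ->
  bilinmap (fun a b => Phi (a, b)) ->
  (forall u m v, (m < i)%N -> Phi (Bg m u, v) = 0) ->
  \sum_(p <- DB x) Phi p = Phi (x, 1).
Proof.
move=> Ex bP Z; rewrite (DB_dec Ex bP) -addn1 iotaD big_cat /= [X in X + _]big1_seq ?add0r; last first.
  move=> a /andP [_]; rewrite mem_iota => /andP [a2 a1]; apply: big1 => p _; apply: Z; lia.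
rewrite big_cons big_nil addr0 subnn.
under eq_bigr => p _ do rewrite Bg0E.
have E : forall p : B * B, Phi (Bg i p.1, eB p.2 *: 1) = eB p.2 *: Phi (Bg i p.1, 1).
  by move=> p; rewrite (linmapZ (bil2 bP _)).
rewrite (eq_bigr _ (fun p _ => E p)).
rewrite (sum_lin (f := fun v => Phi (Bg i v, 1))); last by linsolve.
by rewrite (DB_counitr hB) Ex.
Qed.

Lemma coBg (M : lmodType k) (Phi : H * B -> M) n w :
  bilinmap (fun a b => Phi (a, b)) ->
  \sum_(c <- co (Bg n w)) Phi c = \sum_(c <- co w) Phi (c.1, Bg n c.2).
Proof. by move=> bP; rewrite (teq_sumP (Bg_co hB n w) bP) big_map. Qed.

Lemma fB_deg m n u v : (m + n != r)%N -> fB (Bg m u) (Bg n v) = 0.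
Proof.
move=> ne; rewrite f_E (@F_deg m n) ?Bgidem //.
by rewrite -(scale0r (0 : H)) lamZ mul0r.
Qed.

Lemma DB2R (M : lmodType k) (Psi : B -> B -> B -> B -> M) i j x y :
  Bg i x = x -> Bg j y = y ->
  (forall v1 v2, bilinmap (fun u1 u2 => Psi u1 u2 v1 v2)) ->
  (forall u1 u2, bilinmap (fun v1 v2 => Psi u1 u2 v1 v2)) ->
  (forall u1 m u2 v1 n v2, (m + n < i + j)%N -> Psi u1 (Bg m u2) v1 (Bg n v2) = 0) ->
  \sum_(p <- DB x) \sum_(q <- DB y) Psi p.1 p.2 q.1 q.2 = Psi 1 x 1 y.
Proof.
move=> Ex Ey b1 b2 Z.
rewrite (DB1R (Phi := fun P => \sum_(q <- DB y) Psi P.1 P.2 q.1 q.2) Ex) /=; first last.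
- move=> u m v mi; rewrite (DB_dec (Phi := fun Q => Psi u (Bg m v) Q.1 Q.2) Ey) /=; last by linsolve.
  apply: big1 => b _; apply: big1 => q _; apply: Z; lia.
- by linsolve.
apply: (DB1R (Phi := fun Q => Psi 1 x Q.1 Q.2) Ey); first by linsolve.
by move=> u m v mj; rewrite -Ex; apply: Z; lia.
Qed.

Lemma DB2L (M : lmodType k) (Psi : B -> B -> B -> B -> M) i j x y :
  Bg i x = x -> Bg j y = y ->
  (forall v1 v2, bilinmap (fun u1 u2 => Psi u1 u2 v1 v2)) ->
  (forall u1 u2, bilinmap (fun v1 v2 => Psi u1 u2 v1 v2)) ->
  (forall m u1 u2 n v1 v2, (m + n < i + j)%N -> Psi (Bg m u1) u2 (Bg n v1) v2 = 0) ->
  \sum_(p <- DB x) \sum_(q <- DB y) Psi p.1 p.2 q.1 q.2 = Psi x 1 y 1.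
Proof.
move=> Ex Ey b1 b2 Z.
rewrite (DB1L (Phi := fun P => \sum_(q <- DB y) Psi P.1 P.2 q.1 q.2) Ex) /=; first last.
- move=> u m v mi; rewrite (DB_dec (Phi := fun Q => Psi (Bg m u) v Q.1 Q.2) Ey) /=; last by linsolve.
  apply: big1_seq => b /andP [_]; rewrite inE mem_iota => /orP [/eqP -> | /andP [_ bj]];
    apply: big1 => q _; apply: Z; lia.
- by linsolve.
apply: (DB1L (Phi := fun Q => Psi x 1 Q.1 Q.2) Ey); first by linsolve.
by move=> u m v mj; rewrite -Ex; apply: Z; lia.
Qed.

Lemma lam1 : lam 1 = 1. Proof. exact: lam_one hlam. Qed.

Lemma DAiB2 (M : lmodType k) (K : A -> A -> A -> A -> M) x y :
  (forall c d, bilinmap (fun a b => K a b c d)) -> (forall a b, bilinmap (fun c d => K a b c d)) ->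
  \sum_(p <- DA (iB x)) \sum_(q <- DA (iB y)) K p.1 p.2 q.1 q.2 =
  \sum_(p <- DB x) \sum_(q <- DB y) \sum_(c <- co p.2) \sum_(d <- co q.2)
     K (iB p.1 * iH c.1) (iB c.2) (iB q.1 * iH d.1) (iB d.2).
Proof.
move=> b1 b2.
rewrite (DA_iB (Phi := fun P => \sum_(q <- DA (iB y)) K P.1 P.2 q.1 q.2)); last by linsolve.
apply: eq_bigr => p _ /=.
have E : forall c : H * B, \sum_(q <- DA (iB y)) K (iB p.1 * iH c.1) (iB c.2) q.1 q.2 =
   \sum_(q <- DB y) \sum_(d <- co q.2) K (iB p.1 * iH c.1) (iB c.2) (iB q.1 * iH d.1) (iB d.2).
  move=> c; rewrite (DA_iB (Phi := fun Q => K (iB p.1 * iH c.1) (iB c.2) Q.1 Q.2)) //; linsolve.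
by rewrite (eq_bigr _ (fun c _ => E c)) exchange_big.
Qed.

Lemma BI i j x y : Bg i x = x -> Bg j y = y -> (i + j)%N = r ->
  F (iB x) (iB y) =
  fB x y *: 1 - \sum_(c <- co x) \sum_(d <- co y) fB c.2 d.2 *: iH (c.1 * d.1).
Proof.
move=> Ex Ey Er.
have C := compat hFG (iB x) (iB y).
have bl : bilinmap (fun a b => (fun P : A * A => lam (pi P.2) *: P.1) (a, b)) by linsolve.
have := teq_sumP (Phi := fun P : A * A => lam (pi P.2) *: P.1) C bl; rewrite !big_cat !big_allpairs_dep /=.
have T1 : \sum_(p <- DA (iB x)) \sum_(q <- DA (iB y)) lam (pi (p.2 * q.2)) *: F p.1 q.1
    = F (iB x) (iB y).
  under eq_bigr => p _ do under eq_bigr => q _ do rewrite piM.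
  rewrite (DAiB_pi (Th := fun a hh => \sum_(q <- DA (iB y)) lam (hh * pi q.2) *: F a q.1));
    last by linsolve.
  under eq_bigr => q _ do rewrite mul1r.
  rewrite (DAiB_pi (Th := fun a hh => lam hh *: F (iB x) a)); last by linsolve.
  by rewrite lam1 scale1r.
have T3 : \sum_(p <- DA (iB x)) \sum_(s <- G (iB y)) lam (pi (p.2 * s.2)) *: (p.1 * s.1) = 0.
  apply: big1 => p _; under eq_bigr => s _ do rewrite piM.
  apply: (Gpi2 (Th := fun a hh => lam (pi p.2 * hh) *: (p.1 * a))); linsolve.
have T4 : \sum_(s <- G (iB x)) \sum_(q <- DA (iB y)) lam (pi (s.2 * q.2)) *: (s.1 * q.1) = 0.
  under eq_bigr => s _ do under eq_bigr => q _ do rewrite piM.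
  apply: (Gpi2 (Th := fun a hh => \sum_(q <- DA (iB y)) lam (hh * pi q.2) *: (a * q.1))); linsolve.
have R2 : \sum_(P <- G (iB x * iB y)) lam (pi P.2) *: P.1 = 0.
  apply: (Gpi2 (Th := fun a hh => lam hh *: a)); linsolve.
have R1 : \sum_(P <- DA (F (iB x) (iB y))) lam (pi P.2) *: P.1 = fB x y *: 1.
  rewrite {1}(Ahom0E (part0 Ex Ey Er)) (DA_iH (Phi := fun P => lam (pi P.2) *: P.1)); last by linsolve.
  under eq_bigr => q _ do rewrite pi_iH.
  by rewrite (sum_lin (f := iH)) ?(lam_right_int hlam) ?iHZ ?iH1 ?f_E //; exact: iH_l.
have T2 : \sum_(p <- DA (iB x)) \sum_(q <- DA (iB y)) lam (pi (F p.2 q.2)) *: (p.1 * q.1)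
    = \sum_(c <- co x) \sum_(d <- co y) fB c.2 d.2 *: iH (c.1 * d.1).
  rewrite (DAiB2 (K := fun a b c d => lam (pi (F b d)) *: (a * c))); try by linsolve.
  rewrite (DB2R (Psi := fun u1 u2 v1 v2 => \sum_(c <- co u2) \sum_(d <- co v2)
      lam (pi (F (iB c.2) (iB d.2))) *: (iB u1 * iH c.1 * (iB v1 * iH d.1))) Ex Ey);
    try by linsolve.
    apply: eq_bigr => c _; apply: eq_bigr => d _.
    by rewrite -f_E !smash1l -iHM.
  move=> u1 m u2 v1 n v2 lt.
  rewrite coBg; last by linsolve.
  apply: big1 => c _; rewrite coBg; last by linsolve.
  apply: big1 => d _; rewrite -f_E fB_deg ?scale0r //; lia.
move=> E0; rewrite T1 T2 T3 T4 R1 R2 !addr0 in E0.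
by rewrite -E0 addrK.
Qed.

Lemma YDlem (M : lmodType k) (Th : H -> B -> M) h y : bilinmap Th ->
  \sum_(s <- D h) \sum_(d <- co (act s.1 y)) Th (d.1 * s.2) d.2 =
  \sum_(s <- D h) \sum_(d <- co y) Th (s.1 * d.1) (act s.2 d.2).
Proof.
move=> bT.
pose Phi4 a b cc ee := \sum_(c <- co y) Th (a * c.1 * S cc * ee) (act b c.2).
have E1 : forall s : H * H, \sum_(d <- co (act s.1 y)) Th (d.1 * s.2) d.2 =
   \sum_(p <- D s.1) \sum_(q <- D p.2) Phi4 p.1 q.1 q.2 s.2.
  move=> s; rewrite (teq_sumP (YD_compat hB s.1 y)); last by linsolve.
  by rewrite big_allpairs_dep /D2 big_allpairs_dep; apply: eq_bigr => p _.
rewrite (eq_bigr _ (fun s _ => E1 s)).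
rewrite (coassocL (Phi := fun a b ee => \sum_(q <- D b) Phi4 a q.1 q.2 ee)); last by rewrite /Phi4; linsolve.
apply: eq_bigr => s _.
rewrite (coassocL (Phi := fun b cc ee => Phi4 s.1 b cc ee)); last by rewrite /Phi4; linsolve.
have E2 : forall p : H * H, \sum_(q <- D p.2) Phi4 s.1 p.1 q.1 q.2 =
    e p.2 *: \sum_(c <- co y) Th (s.1 * c.1) (act p.1 c.2).
  move=> p; rewrite /Phi4 exchange_big scaler_sumr; apply: eq_bigr => c _.
  under eq_bigr => q _ do rewrite -mulrA.
  have lf : linmap (fun z => Th (s.1 * c.1 * z) (act p.1 c.2)) by linsolve.
  have := linmap_sum (D p.2) (fun q => S q.1 * q.2) lf; rewrite /= => <-.
  by rewrite (hS_left hH) -scalerAr mulr1 (linmapZ (bil1 bT _)).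
rewrite (eq_bigr _ (fun p _ => E2 p)).
rewrite (DcounitR (f := fun b => \sum_(c <- co y) Th (s.1 * c.1) (act b c.2))) //.
linsolve.
Qed.

Lemma DAsm2 (M : lmodType k) (K : A -> A -> A -> A -> M) x h y g :
  (forall c d, bilinmap (fun a b => K a b c d)) -> (forall a b, bilinmap (fun c d => K a b c d)) ->
  \sum_(P <- DA (iB x * iH h)) \sum_(Q <- DA (iB y * iH g)) K P.1 P.2 Q.1 Q.2 =
  \sum_(p <- DB x) \sum_(q <- DB y) \sum_(c <- co p.2) \sum_(s <- D h)
     \sum_(d <- co q.2) \sum_(t <- D g)
     K (iB p.1 * iH (c.1 * s.1)) (iB c.2 * iH s.2) (iB q.1 * iH (d.1 * t.1)) (iB d.2 * iH t.2).
Proof.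
move=> b1 b2.
rewrite (DA_sm (Phi := fun P => \sum_(Q <- DA (iB y * iH g)) K P.1 P.2 Q.1 Q.2)); last by linsolve.
apply: eq_bigr => p _ /=.
have E : forall (c : H * B),
   \sum_(s <- D h) \sum_(Q <- DA (iB y * iH g)) K (iB p.1 * iH (c.1 * s.1)) (iB c.2 * iH s.2) Q.1 Q.2 =
   \sum_(s <- D h) \sum_(q <- DB y) \sum_(d <- co q.2) \sum_(t <- D g)
     K (iB p.1 * iH (c.1 * s.1)) (iB c.2 * iH s.2) (iB q.1 * iH (d.1 * t.1)) (iB d.2 * iH t.2).
  move=> c; apply: eq_bigr => s _; rewrite (DA_sm (Phi := fun Q => K (iB p.1 * iH (c.1 * s.1)) (iB c.2 * iH s.2) Q.1 Q.2)) //; try linsolve.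
rewrite (eq_bigr _ (fun c _ => E c)).
under eq_bigr => c _ do rewrite exchange_big.
by rewrite exchange_big.
Qed.

Lemma part2_gen (ft : A -> A -> k) (bft : bilin ft)
  (hft : forall x h y h', ft (iB x * iH h) (iB y * iH h') = fB x (act h y) * e h')
  i j x y h g : Bg i x = x -> Bg j y = y -> (i + j)%N = r ->
  F (iB x * iH h) (iB y * iH g) + dc DA ft (iB x * iH h) (iB y * iH g) = 0.
Proof.
move=> Ex Ey Er.
have Eys : forall s, Bg j (act s y) = act s y by move=> s; rewrite (Bg_act hB) Ey.
pose P := \sum_(s <- D h) fB x (act s.1 y) *: iH (s.2 * g).
pose X := \sum_(s <- D h) \sum_(c <- co x) \sum_(d <- co (act s.1 y))
            fB c.2 d.2 *: iH (c.1 * d.1 * (s.2 * g)).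
pose T1 := \sum_(c <- co x) \sum_(s <- D h) \sum_(d <- co y)
            fB c.2 (act s.2 d.2) *: iH (c.1 * s.1 * (d.1 * g)).
have FE : F (iB x * iH h) (iB y * iH g) = P - X.
  rewrite Fb mulrA smash_mulE big_distrl /= (linmap_sum _ _ (F_l2 _)).
  rewrite /P /X -sumrB; apply: eq_bigr => s _.
  rewrite Fc Fc -mulrA -iHM (BI Ex (Eys s.1) Er) mulrBl -scalerAl mul1r.
  congr (_ - _); rewrite big_distrl; apply: eq_bigr => c _.
  rewrite big_distrl; apply: eq_bigr => d _.
  by rewrite /= -scalerAl -iHM.
have XE : X = T1.
  rewrite /X exchange_big; apply: eq_bigr => c _.
  pose Th := fun hh w => fB c.2 w *: iH (c.1 * hh * g).
  have bTh : bilinmap Th by rewrite /Th; have := fB_bilin; linsolve.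
  transitivity (\sum_(s <- D h) \sum_(d <- co (act s.1 y)) Th (d.1 * s.2) d.2).
    by apply: eq_bigr => s _; apply: eq_bigr => d _; rewrite /Th !mulrA.
  rewrite (YDlem _ _ bTh); apply: eq_bigr => s _; apply: eq_bigr => d _.
  by rewrite /Th !mulrA.
have T1E : \sum_(P <- DA (iB x * iH h)) \sum_(Q <- DA (iB y * iH g)) ft P.2 Q.2 *: (P.1 * Q.1) = T1.
  rewrite (DAsm2 (K := fun a b c d => ft b d *: (a * c))); try by linsolve.
  rewrite (DB2R (Psi := fun u1 u2 v1 v2 => \sum_(c <- co u2) \sum_(s <- D h) \sum_(d <- co v2)
     \sum_(t <- D g) ft (iB c.2 * iH s.2) (iB d.2 * iH t.2) *:
        (iB u1 * iH (c.1 * s.1) * (iB v1 * iH (d.1 * t.1)))) Ex Ey); try by linsolve.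
    rewrite /T1; apply: eq_bigr => c _; apply: eq_bigr => s _; apply: eq_bigr => d _.
    under eq_bigr => t _ do rewrite hft !smash1l (mulrC (fB _ _)) -scalerA.
    rewrite (DcounitR (f := fun t1 => fB c.2 (act s.2 d.2) *: (iH (c.1 * s.1) * iH (d.1 * t1))));
      last by linsolve.
    by rewrite -!iHM.
  move=> u1 m u2 v1 n v2 lt; rewrite coBg; last by linsolve.
  apply: big1 => c _; apply: big1 => s _; rewrite coBg; last by linsolve.
  apply: big1 => d _; apply: big1 => t _.
  rewrite hft -(Bg_act hB) fB_deg ?mul0r ?scale0r //; lia.
have T2E : \sum_(P <- DA (iB x * iH h)) \sum_(Q <- DA (iB y * iH g)) ft P.1 Q.1 *: (P.2 * Q.2) = P.
  rewrite (DAsm2 (K := fun a b c d => ft a c *: (b * d))); try by linsolve.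
  rewrite (DB2L (Psi := fun u1 u2 v1 v2 => \sum_(c <- co u2) \sum_(s <- D h) \sum_(d <- co v2)
     \sum_(t <- D g) ft (iB u1 * iH (c.1 * s.1)) (iB v1 * iH (d.1 * t.1)) *:
        (iB c.2 * iH s.2 * (iB d.2 * iH t.2))) Ex Ey); try by linsolve.
    rewrite (teq_sumP (co_oneB hB)); last by linsolve.
    rewrite sum1 /=; apply: eq_bigr => s _.
    rewrite (teq_sumP (co_oneB hB)); last by linsolve.
    rewrite sum1 /=.
    under eq_bigr => t _ do rewrite hft !mul1r !smash1l (mulrC (fB _ _)) -scalerA.
    rewrite (DcounitL (f := fun t2 => fB x (act s.1 y) *: (iH s.2 * iH t2))); last by linsolve.
    by rewrite -iHM.
  move=> m u1 u2 n v1 v2 lt.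
  apply: big1 => c _; apply: big1 => s _; apply: big1 => d _; apply: big1 => t _.
  rewrite hft -(Bg_act hB) fB_deg ?mul0r ?scale0r //; lia.
rewrite /dc.
under eq_bigr => P0 _ do rewrite sumrB.
rewrite sumrB T1E T2E FE XE.
by rewrite addrC addrA subrK subrr.
Qed.

Lemma part2 (ft : A -> A -> k) : bilin ft ->
  (forall x h y h', ft (iB x * iH h) (iB y * iH h') = fB x (act h y) * e h') ->
  forall i j a b, Ahom Bg iB iH i a -> Ahom Bg iB iH j b -> (i + j)%N = r ->
    F a b + dc DA ft a b = 0.
Proof.
move=> bft hft i j a b [t [/allP Ht ->]] [t' [/allP Ht' ->]] Er.
have l1 : forall v, linmap (fun u => F u v + dc DA ft u v) by move=> v; rewrite /dc; linsolve.
have l2 : forall u, linmap (fun v => F u v + dc DA ft u v) by move=> u; rewrite /dc; linsolve.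
rewrite !smashE (linmap_sum _ _ (l1 _)) big1_seq // => p /andP [_ /Ht /eqP Ep].
rewrite (linmap_sum _ _ (l2 _)) big1_seq // => q /andP [_ /Ht' /eqP Eq].
exact: (part2_gen bft hft _ _ Ep Eq Er).
Qed.

Lemma main_sec :
  (forall i j x y, Bg i x = x -> Bg j y = y -> (i + j)%N = r ->
     Ahom Bg iB iH 0 (F (iB x) (iB y))) /\
  hochschild_cocycle eB fB /\
  H_stable D e act fB /\
  (forall ft : A -> A -> k, bilin ft ->
     (forall x h y h', ft (iB x * iH h) (iB y * iH h') = fB x (act h y) * e h') ->
     forall i j a b, Ahom Bg iB iH i a -> Ahom Bg iB iH j b -> (i + j)%N = r ->
       F a b + dc DA ft a b = 0).
Proof.
split; first exact: part0.
split; first exact: fB_cocycle.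
split; first exact: fB_Hstable.
exact: part2.
Qed.

End Main.

Theorem mainTheorem2 (k : closedFieldType) (k_char0 : [pchar k] =i pred0)
  (H : algType k) (D : H -> tens H H) (e : H -> k) (S : H -> H)
  (hH : hopf_algebra D e S)
  (lam : H -> k) (hlam : integral_cond D e S lam)
  (B : algType k) (act : H -> B -> B) (co : B -> tens H B)
  (DB : B -> tens B B) (eB : B -> k) (Bg : nat -> B -> B)
  (hB : YD_graded_bialgebra D e S act co DB eB Bg)
  (A : algType k) (DA : A -> tens A A) (eA : A -> k)
  (iB : B -> A) (iH : H -> A) (pi : A -> H)
  (hA : bosonization D e act co DB eB DA eA iB iH pi)
  (r : nat) (hr : (0 < r)%N)
  (F : A -> A -> A) (G : A -> tens A A)
  (hFG : Zb2 DA eA F G)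
  (hbitriv : H_bitrivial Bg iB iH pi F G)
  (hdeg : homog_neg Bg iB iH r F G) :
  (* F maps (B (x) B)_r into A_0 = H *)
  (forall i j x y, Bg i x = x -> Bg j y = y -> (i + j)%N = r ->
     Ahom Bg iB iH 0 (F (iB x) (iB y))) /\
  (* 1. f is an H-stable Hochschild 2-cocycle *)
  hochschild_cocycle eB (f_of Bg iB pi lam r F) /\
  H_stable D e act (f_of Bg iB pi lam r F) /\
  (* 2. F + d^c ft vanishes on (A (x) A)_r, for the induced map ft *)
  (forall ft : A -> A -> k, bilin ft ->
     (forall x h y h', ft (iB x * iH h) (iB y * iH h')
                       = f_of Bg iB pi lam r F x (act h y) * e h') ->
     forall i j a b, Ahom Bg iB iH i a -> Ahom Bg iB iH j b -> (i + j)%N = r ->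
       F a b + dc DA ft a b = 0).
Proof. exact: (main_sec hH hlam hB hA hFG hbitriv hdeg). Qed.
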